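(* Let $g(x,y)=\sum_{i,j=-\infty}^{\infty}c(i,j)x^iy^j$ be a nonzero bilateral formal series with $g\perp g$, and let $f(x,y)$ be a bilateral formal series. Then $f\perp g$ if and only if there exist integers $m_0,k_0$ with $c(m_0,k_0)\neq 0$ and bilateral formal series $P(x)=\sum_{i=-\infty}^{\infty}p_ix^i$, $Q(x)=\sum_{i=-\infty}^{\infty}q_ix^i$ (with arbitrary complex coefficient sequences $p_i,q_i$) such that $$f(x,y)=\frac{1}{c(m_0,k_0)}\Big(P(x)\,[x^{m_0}]g(x,y)-Q(x)\,[x^{k_0}]g(x,y)\Big),$$ where $[x^{m}]g(x,y)=\sum_{j=-\infty}^{\infty}c(m,j)y^j$ denotes the coefficient of $x^{m}$ in $g(x,y)$.
   Context: A bilateral formal series in $x,y$ is a formal expression $\sum_{i,j\in\mathbb{Z}}\lambda(i,j)x^iy^j$ with complex coefficients. For two such series $f,g$, the expression $g(u,v)f(z,w)-g(u,w)f(z,v)+g(v,w)f(z,u)$ is a well-defined formal series in four independent variables $u,v,w,z$. One writes $f\perp g$ if this expression is identically zero. *)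

(* Defs.v *)
From HB Require Import structures.
From mathcomp Require Import all_boot all_order all_algebra.
From mathcomp Require Import complex.
From mathcomp Require Import Rstruct.
From Stdlib Require Import Reals.
Set Implicit Arguments. Unset Strict Implicit. Unset Printing Implicit Defensive.
Import Order.TTheory GRing.Theory Num.Theory.
Local Open Scope ring_scope.

Notation Cplx := (complex Rdefinitions.R).

(* A bilateral formal series sum_{i,j in Z} lambda(i,j) x^i y^j is given by
   its coefficient function lambda. *)
Notation bseries2 := (int -> int -> Cplx).
Notation bseries1 := (int -> Cplx).

(* f ⊥ g : the formal series g(u,v)f(z,w) - g(u,w)f(z,v) + g(v,w)f(z,u) in
   u,v,w,z vanishes identically, i.e. its coefficient of u^a v^b w^c z^d is 0
   for all a b c d.  (Each product is of series in disjoint variables, so the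
   coefficient of u^a v^b w^c z^d in g(u,v)f(z,w) is g(a,b) f(d,c), etc.) *)
Definition orth (f g : bseries2) : Prop :=
  forall a b c d : int,
    g a b * f d c - g a c * f d b + g b c * f d a = 0.

(* Main.v *)
Require Import Defs.
From HB Require Import structures.
From mathcomp Require Import all_boot all_order all_algebra.
From mathcomp Require Import complex Rstruct.
From mathcomp Require Import ring.
Import Order.TTheory GRing.Theory Num.Theory.
Local Open Scope ring_scope.

Theorem theorem2p2 (g f : bseries2) :
  (exists i j : int, g i j != 0) ->
  orth g g ->
  (orth f g <->
   exists m0 k0 : int, g m0 k0 != 0 /\
     exists P Q : bseries1,
       forall i j : int,
         f i j = (g m0 k0)^-1 * (P i * g m0 j - Q i * g k0 j)).
Proof.
move=> [m0 [k0 H]] Hg; split.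
  move=> Hf; exists m0, k0; split => //.
  exists (fun i => f i k0), (fun i => f i m0) => i j.
  apply: (mulfI H); rewrite mulrA mulfV // mul1r.
  have E := Hf m0 k0 j i.
  apply/eqP; rewrite -subr_eq0; apply/eqP.
  have -> : g m0 k0 * f i j - (f i k0 * g m0 j - f i m0 * g k0 j) =
    g m0 k0 * f i j - g m0 j * f i k0 + g k0 j * f i m0 by ring.
  exact E.
move=> [m1 [k1 [H1 [P [Q Hf]]]]] a b c d.
rewrite !Hf.
have E1 := Hg a b c m1.
have E2 := Hg a b c k1.
have -> : g a b * ((g m1 k1)^-1 * (P d * g m1 c - Q d * g k1 c)) -
  g a c * ((g m1 k1)^-1 * (P d * g m1 b - Q d * g k1 b)) +
  g b c * ((g m1 k1)^-1 * (P d * g m1 a - Q d * g k1 a)) =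
  (g m1 k1)^-1 * (P d * (g a b * g m1 c - g a c * g m1 b + g b c * g m1 a)
                - Q d * (g a b * g k1 c - g a c * g k1 b + g b c * g k1 a)) by ring.
by rewrite E1 E2 !mulr0 subrr mulr0.
Qed.
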